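(* Assume $\Delta^2=0$, a constant per-stage budget $\Lambda(t)=\Lambda$, $\pi_0<1$ with $\pi_0\ge(1-\pi_0)/|G|$, and the uniformity hypothesis (U). Define $\bar c(1)=\sigma^2/\sigma_0^2$, $e(\pi_0,G)=\sqrt{|G|\pi_0/(1-\pi_0)}-1$, $c_{\mathrm{crit}}=\Lambda/(|\Psi(1)|\,e(\pi_0,G))$, and recursively $$\bar c(t+1)=\begin{cases}\dfrac{\pi_0^{3/2}+|G|^{-1/2}(1-\pi_0)^{3/2}}{\sqrt{\pi_0}+\sqrt{|G|(1-\pi_0)}}\left((1+|G|)\bar c(t)+\dfrac{\Lambda}{|\Psi(1)|}\right), & \bar c(t)<c_{\mathrm{crit}},\\[2mm] \bar c(t)+\dfrac{\pi_0\Lambda}{|\Psi(1)|}, & \bar c(t)\ge c_{\mathrm{crit}}.\end{cases}$$ Then under the semi-omniscient policy, for all $t\ge1$ and all $i\in H(\Psi(t-1))$, $\mathbb E[c_i(t)\mid |\Psi(1)|]\le\bar c(t)$.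
   Context: Model. There are $Q$ cells. At time $1$ each cell independently contains a target with probability $p_0\in(0,1)$; $\Psi(t)$ is the set of target locations at time $t$, the number of targets $|\Psi(1)|\sim\mathrm{Binomial}(Q,p_0)$ is constant in time, and at most one target occupies a cell. Each cell $j$ has a set $G(j)$ of neighbours with $|G(j)|=|G|$ for all $j$; $H(j)=\{j\}\cup G(j)$, and for a set $S$ of cells $G(S)=\bigcup_{j\in S}G(j)$, $H(S)=S\cup G(S)$; neighbourhoods of distinct targets are disjoint so that $|H(\Psi(t))|=(1+|G|)|\Psi(1)|$. Between stages each target independently stays in its cell with probability $\pi_0$ and otherwise moves to a uniformly chosen neighbour. Amplitudes: initial $\mathcal N(\mu_0,\sigma_0^2)$, random walk with $\mathcal N(0,\Delta^2)$ increments. At stage $t$ efforts $\lambda_i(t)\ge0$, $\sum_i\lambda_i(t)\le\Lambda(t)$, give observations $y_i(t)=\sqrt{\lambda_i(t)}I_i(t)\theta_i(t)+n_i(t)$, $n_i(t)$ i.i.d. $\mathcal N(0,\sigma^2)$. Posterior precisions $c_i(t)$ ($=\sigma^2/$posterior variance) start at $c_i(1)=\sigma^2/\sigma_0^2$ and evolve by: for each target $n$ at $s^{(n)}(t)$ and each $i\in H(s^{(n)}(t))$, $1/c_i(t+1)=1/(c_{s^{(n)}(t)}(t)+\lambda_{s^{(n)}(t)}(t))+\Delta^2/\sigma^2$ (so for $\Delta^2=0$, $c_i(t+1)=c_{s^{(n)}(t)}(t)+\lambda_{s^{(n)}(t)}(t)$). Semi-omniscient policy: at stage $t$ it knows $\Psi(t-1)$,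 so $p_i(t)=\pi_0$ for $i\in\Psi(t-1)$, $p_i(t)=(1-\pi_0)/|G|$ for $i\in G(\Psi(t-1))$, $p_i(t)=0$ otherwise; it allocates $\lambda^s(t)$ minimizing $\sum_i p_i(t)/(c_i(t)+\lambda_i)$ over $\lambda\ge0$ with $\sum_i\lambda_i=\Lambda(t)$. Hypothesis (U): for every $t>1$ the posterior precisions used to compute the allocation are uniform on $H(\Psi(t-1))$ and equal to the bounding sequence, $c_i(t)=\bar c(t)$ for $i\in H(\Psi(t-1))$ (used to determine which cells receive nonzero effort). *)

(* Defs.v *)
(* reals as an arbitrary real closed field R (only algebra,
   order and square roots are needed; all probabilities are finite sums). *)
From HB Require Import structures.
From mathcomp Require Import all_boot all_order all_algebra.
Set Implicit Arguments. Unset Strict Implicit. Unset Printing Implicit Defensive.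
Import Order.TTheory GRing.Theory Num.Theory.
Local Open Scope ring_scope.

Definition Hn (T : finType) (G : T -> {set T}) (j : T) : {set T} := j |: G j.

Definition eG (R : rcfType) (g : nat) (pi0 : R) : R :=
  Num.sqrt (g%:R * pi0 / (1 - pi0)) - 1.

Definition ccrit (R : rcfType) (g N : nat) (pi0 Lam : R) : R :=
  Lam / (N%:R * eG g pi0).

Definition cbar_step (R : rcfType) (g N : nat) (pi0 Lam : R) (c : R) : R :=
  if c < ccrit g N pi0 Lam then
    (pi0 * Num.sqrt pi0 + (1 - pi0) * Num.sqrt (1 - pi0) / Num.sqrt g%:R)
      / (Num.sqrt pi0 + Num.sqrt (g%:R * (1 - pi0)))
      * ((1 + g%:R) * c + Lam / N%:R)
  else c + pi0 * Lam / N%:R.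

(* bounding sequence: cbar 1 = sigma^2/sigma0^2, cbar (t+1) = cbar_step (cbar t);
   cbar 0 is an irrelevant junk value. *)
Fixpoint cbar (R : rcfType) (g N : nat) (pi0 Lam sig2 sig02 : R) (t : nat) : R :=
  match t with
  | 0 | 1 => sig2 / sig02
  | t'.+1 => cbar_step g N pi0 Lam (cbar g N pi0 Lam sig2 sig02 t')
  end.

Definition move (R : rcfType) (T : finType) (G : T -> {set T}) (g : nat)
  (pi0 : R) (x y : T) : R :=
  if y == x then pi0 else if y \in G x then (1 - pi0) / g%:R else 0.

(* a history of length k: positions of the N targets at times 1..k *)
Definition Hist (T : finType) (N k : nat) := {ffun 'I_k -> {ffun 'I_N -> T}}.

(* Psi(j) for j = 0..k, Psi(0) = s0 the given initial configuration *)
Definition psi (T : finType) (N k : nat) (s0 : {ffun 'I_N -> T})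
  (h : Hist T N k) (j : nat) : {ffun 'I_N -> T} :=
  if j is j'.+1 then
    match (insub j' : option 'I_k) with Some o => h o | None => s0 end
  else s0.

Definition hprob (R : rcfType) (T : finType) (G : T -> {set T}) (g N k : nat)
  (pi0 : R) (s0 : {ffun 'I_N -> T}) (h : Hist T N k) : R :=
  \prod_(j < k) \prod_(n < N)
     move G g pi0 (psi s0 h j n) (psi s0 h j.+1 n).

(* semi-omniscient location probabilities p_i(t) given Psi(t-1) = P *)
Definition pprob (R : rcfType) (T : finType) (G : T -> {set T}) (g N : nat)
  (pi0 : R) (P : {ffun 'I_N -> T}) (i : T) : R :=
  if [exists n, P n == i] then pi0
  else if [exists n, i \in G (P n)] then (1 - pi0) / g%:R else 0.

Definition obj (R : rcfType) (T : finType) (G : T -> {set T}) (g N : nat)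
  (pi0 : R) (P : {ffun 'I_N -> T}) (c : T -> R) (lam : T -> R) : R :=
  \sum_i pprob G g pi0 P i / (c i + lam i).

Definition is_opt_alloc (R : rcfType) (T : finType) (G : T -> {set T})
  (g N : nat) (pi0 Lam : R) (P : {ffun 'I_N -> T}) (c : T -> R)
  (lam : T -> R) : Prop :=
  [/\ forall i, 0 <= lam i, \sum_i lam i = Lam &
      forall lam' : T -> R, (forall i, 0 <= lam' i) -> \sum_i lam' i = Lam ->
        obj G g pi0 P c lam <= obj G g pi0 P c lam'].

(* posterior precisions c_i(t) along a history h (t <= k+1);
   stage t' uses positions Psi(t') and the allocation pol t' (Psi(t'-1));
   for i in H(s^(n)(t')):  1/c_i(t'+1) = 1/(c_s(t') + lambda_s(t')) + Delta^2/sigma^2 ;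
   other cells keep their precision. *)
Fixpoint prec (R : rcfType) (T : finType) (G : T -> {set T}) (N k : nat)
  (sig2 sig02 Delta2 : R) (s0 : {ffun 'I_N -> T})
  (pol : nat -> {ffun 'I_N -> T} -> T -> R) (h : Hist T N k) (t : nat) : T -> R :=
  match t with
  | 0 | 1 => fun _ => sig2 / sig02
  | t'.+1 => fun i =>
      let S := psi s0 h t' in
      match [pick n | i \in Hn G (S n)] with
      | Some n =>
          ((prec G sig2 sig02 Delta2 s0 pol h t' (S n)
              + pol t' (psi s0 h t'.-1) (S n))^-1 + Delta2 / sig2)^-1
      | None => prec G sig2 sig02 Delta2 s0 pol h t' i
      end
  end.

(* Main.v *)
Require Import Defs.
From HB Require Import structures.
From mathcomp Require Import all_boot all_order all_algebra.
From mathcomp Require Import ring lra.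
Set Implicit Arguments. Unset Strict Implicit. Unset Printing Implicit Defensive.
Import Order.TTheory GRing.Theory Num.Theory.
Local Open Scope ring_scope.

Definition ext (T : finType) (N k : nat) (h : Hist T N k) (z : {ffun 'I_N -> T}) :
  Hist T N k.+1 :=
  [ffun i : 'I_k.+1 => match (insub (val i) : option 'I_k) with Some j => h j | None => z end].

Definition trunc (T : finType) (N k : nat) (h : Hist T N k.+1) : Hist T N k :=
  [ffun j : 'I_k => h (widen_ord (leqnSn k) j)].

Lemma psi_ext (T : finType) (N k : nat) s0 (h : Hist T N k) z j :
  (j <= k)%N -> psi s0 (ext h z) j = psi s0 h j.
Proof.
case: j => [|j] // Hj; rewrite /psi.
case: insubP => [o _ Ho|]; last by rewrite ltnS ltnW.
case: insubP => [o' _ Ho'|]; last by rewrite Hj.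
rewrite ffunE; case: insubP => [o'' _ Ho''|]; last by rewrite Ho Hj.
by congr (h _); apply: val_inj; rewrite /= Ho'' Ho Ho'.
Qed.

Lemma psi_ext_last (T : finType) (N k : nat) s0 (h : Hist T N k) z :
  psi s0 (ext h z) k.+1 = z.
Proof.
rewrite /psi; case: insubP => [o _ Ho|]; last by rewrite ltnSn.
rewrite ffunE; case: insubP => [o'' _ Ho''|] //.
by move: (ltn_ord o''); rewrite Ho'' Ho ltnn.
Qed.

Lemma sum_ext (R : rcfType) (T : finType) (N k : nat) (F : Hist T N k.+1 -> R) :
  \sum_(h : Hist T N k.+1) F h = \sum_(h : Hist T N k) \sum_z F (ext h z).
Proof.
rewrite pair_big /=.
apply: (reindex (fun p : Hist T N k * {ffun 'I_N -> T} => ext p.1 p.2)).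
exists (fun h => (trunc h, h ord_max)) => [[h z] _|h _] /=.
- congr pair.
  + apply/ffunP => j; rewrite !ffunE; case: insubP => [o _ Ho|]; last by rewrite /= ltn_ord.
    by congr (h _); apply: val_inj.
  + rewrite ffunE; case: insubP => [o _ Ho|] //.
    by move: (ltn_ord o); rewrite Ho /= ltnn.
- apply/ffunP => i; rewrite !ffunE; case: insubP => [o _ Ho|].
  + by rewrite ffunE; congr (h _); apply: val_inj.
  + rewrite -ltnNge ltnS => Hi; congr (h _); apply: val_inj => /=.
    by apply/eqP; rewrite eqn_leq Hi -ltnS ltn_ord.
Qed.

Lemma hprob_ext (R : rcfType) (T : finType) G g (N k : nat) (pi0 : R) s0 (h : Hist T N k) z :
  hprob G g pi0 s0 (ext h z) =
  hprob G g pi0 s0 h * \prod_(n < N) move G g pi0 (psi s0 h k n) (z n).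
Proof.
rewrite /hprob big_ord_recr; congr (_ * _).
  apply: eq_bigr => j _.
  by rewrite (psi_ext _ _ _ (ltnW (ltn_ord j))) (psi_ext _ _ _ (ltn_ord j)).
by rewrite (psi_ext _ _ _ (leqnn k)) psi_ext_last.
Qed.

Lemma precS (R : rcfType) (T : finType) G N k (sig2 sig02 D : R) s0 pol
  (h : Hist T N k) t i : (0 < t)%N ->
  prec G sig2 sig02 D s0 pol h t.+1 i =
  match [pick n | i \in Hn G (psi s0 h t n)] with
  | Some n =>
     ((prec G sig2 sig02 D s0 pol h t (psi s0 h t n)
        + pol t (psi s0 h t.-1) (psi s0 h t n))^-1 + D / sig2)^-1
  | None => prec G sig2 sig02 D s0 pol h t i
  end.
Proof. by case: t. Qed.

Lemma prec_eq (R : rcfType) (T : finType) G N k1 k2 (sig2 sig02 D : R) s0 pol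
  (h1 : Hist T N k1) (h2 : Hist T N k2) t :
  (forall j, (j < t)%N -> psi s0 h1 j = psi s0 h2 j) ->
  prec G sig2 sig02 D s0 pol h1 t =1 prec G sig2 sig02 D s0 pol h2 t.
Proof.
elim: t => [|t IH] Hj i //.
case: t IH Hj => [|t] IH Hj //.
have Hj' : forall j, (j < t.+1)%N -> psi s0 h1 j = psi s0 h2 j.
  by move=> j Hj'; apply: Hj; exact: ltnW.
rewrite precS // [RHS]precS // (Hj t.+1) // (Hj t) ?(ltnW (ltnSn _)) //.
by case: pickP => [n Hn|Hn]; rewrite !IH.
Qed.
Lemma move_in (R : rcfType) (T : finType) (G : T -> {set T}) (g : nat) (pi0 : R) (x y : T) :
  move G g pi0 x y != 0 -> y \in Hn G x.
Proof.
rewrite /move /Hn in_setU1; case: (y =P x) => [->|_]; rewrite ?eqxx //=.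
by case: (y \in G x) => //; rewrite eqxx.
Qed.

Lemma move_ge0 (R : rcfType) (T : finType) (G : T -> {set T}) (g : nat) (pi0 : R) (x y : T) :
  0 <= pi0 -> pi0 <= 1 -> 0 <= move G g pi0 x y.
Proof.
move=> h0 h1; rewrite /move; case: eqP => // _; case: ifP => // _.
by apply: divr_ge0; rewrite ?subr_ge0 ?ler0n.
Qed.

Lemma move_expect (R : rcfType) (T : finType) (G : T -> {set T}) (g : nat) (pi0 : R) (x : T) (F : T -> R) :
  x \notin G x ->
  \sum_y move G g pi0 x y * F y = pi0 * F x + (1 - pi0) / g%:R * \sum_(y in G x) F y.
Proof.
move=> hx.
rewrite (bigID (mem (Hn G x))) /= [X in _ + X]big1 ?addr0; last first.
  move=> y hy; rewrite /move; move: hy; rewrite /Hn in_setU1 negb_or => /andP[/negbTE -> /negbTE ->].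
  by rewrite mul0r.
rewrite big_setU1 //= /move eqxx mulr_sumr; congr (_ + _).
apply: eq_bigr => y hy; case: eqP => [e|_]; first by move: hx; rewrite -{1}e hy.
by rewrite hy.
Qed.

Lemma move_sum (R : rcfType) (T : finType) (G : T -> {set T}) (g : nat) (pi0 : R) (x : T) :
  (0 < g)%N -> #|G x| = g -> x \notin G x ->
  \sum_y move G g pi0 x y = 1.
Proof.
move=> g0 hg hx.
have := move_expect g pi0 (fun _ => 1) hx.
under eq_bigr do rewrite mulr1.
move=> ->; rewrite sumr_const hg mulr1 -mulr_natr mulfVK ?subrKC //.
by rewrite mul1r pnatr_eq0 -lt0n.
Qed.

Lemma hprob_ge0 (R : rcfType) (T : finType) (G : T -> {set T}) (g : nat) N k (pi0 : R) s0 (h : Hist T N k) :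
  0 <= pi0 -> pi0 <= 1 -> 0 <= hprob G g pi0 s0 h.
Proof.
move=> h0 h1; apply: prodr_ge0 => j _; apply: prodr_ge0 => n _; exact: move_ge0.
Qed.

Lemma marginal (R : rcfType) (T : finType) (G : T -> {set T}) (g : nat) N (pi0 : R) (P : {ffun 'I_N -> T})
  (n : 'I_N) (F : T -> R) :
  (0 < g)%N -> (forall j, #|G j| = g) -> (forall j, j \notin G j) ->
  \sum_(z : {ffun 'I_N -> T}) (\prod_(m < N) move G g pi0 (P m) (z m)) * F (z n)
  = \sum_y move G g pi0 (P n) y * F y.
Proof.
move=> g0 hg hn.
pose F' := fun (m : 'I_N) (y : T) => move G g pi0 (P m) y * (if m == n then F y else 1).
have E : forall z : {ffun 'I_N -> T},
  (\prod_(m < N) move G g pi0 (P m) (z m)) * F (z n) = \prod_(m < N) F' m (z m).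
  move=> z; rewrite /F' big_split /=; congr (_ * _).
  by rewrite (bigD1 n) //= eqxx big1 ?mulr1 // => m /negbTE ->.
under eq_bigr do rewrite E.
rewrite -(bigA_distr_bigA F') (bigD1 n) //= [X in _ * X]big1 ?mulr1.
  by apply: eq_bigr => y _; rewrite /F' eqxx.
move=> m /negbTE hm; rewrite /F' hm.
under eq_bigr do rewrite mulr1.
exact: move_sum.
Qed.

Lemma prod_move_sum (R : rcfType) (T : finType) (G : T -> {set T}) (g N : nat) (pi0 : R)
  (P : {ffun 'I_N -> T}) :
  (0 < g)%N -> (forall j, #|G j| = g) -> (forall j, j \notin G j) ->
  \sum_(z : {ffun 'I_N -> T}) \prod_(m < N) move G g pi0 (P m) (z m) = 1.
Proof.
move=> g0 hg hn.
rewrite -(bigA_distr_bigA (fun m y => move G g pi0 (P m) y)) big1 // => m _.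
exact: move_sum.
Qed.

Lemma hprob_sum1 (R : rcfType) (T : finType) (G : T -> {set T}) (g N : nat) (pi0 : R) s0 k :
  (0 < g)%N -> (forall j, #|G j| = g) -> (forall j, j \notin G j) ->
  \sum_(h : Hist T N k) hprob G g pi0 s0 h = 1.
Proof.
move=> g0 hg hn; elim: k => [|k IH].
  rewrite (eq_bigr (fun _ => 1)); last by move=> h _; rewrite /hprob big_ord0.
  by rewrite sumr_const card_ffun card_ord expn0.
rewrite sum_ext -[RHS]IH; apply: eq_bigr => h _.
under eq_bigr do rewrite hprob_ext.
by rewrite -mulr_sumr prod_move_sum // mulr1.
Qed.
Definition tgt (T : finType) N (P : {ffun 'I_N -> T}) (i : T) := [exists m, P m == i].
Definition nbr (T : finType) (G : T -> {set T}) N (P : {ffun 'I_N -> T}) (i : T) :=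
  [exists m, i \in G (P m)].

Definition lsf (R : rcfType) (T : finType) (G : T -> {set T}) N (P : {ffun 'I_N -> T})
  (vt vn : R) (i : T) : R :=
  if tgt P i then vt else if nbr G P i then vn else 0.

Definition DisjP (T : finType) (G : T -> {set T}) N (P : {ffun 'I_N -> T}) :=
  forall m m' : 'I_N, m != m' -> [disjoint Hn G (P m) & Hn G (P m')].

Lemma same_m (T : finType) (G : T -> {set T}) N (P : {ffun 'I_N -> T}) m m' i :
  DisjP G P -> i \in Hn G (P m) -> i \in Hn G (P m') -> m = m'.
Proof.
move=> hd h1 h2; case: (eqVneq m m') => // ne.
by move: (disjointFr (hd _ _ ne) h1); rewrite h2.
Qed.

Lemma tgt_P (T : finType) N (P : {ffun 'I_N -> T}) m : tgt P (P m).
Proof. by apply/existsP; exists m. Qed.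

Lemma tgt_G (T : finType) (G : T -> {set T}) N (P : {ffun 'I_N -> T}) m i :
  DisjP G P -> (forall j, j \notin G j) -> i \in G (P m) -> tgt P i = false.
Proof.
move=> hd hn hi; apply/negbTE/existsP => -[m' /eqP e].
have em : m' = m.
  apply: (@same_m _ _ _ _ _ _ i hd); first by rewrite /Hn e setU11.
  by rewrite /Hn in_setU1 hi orbT.
by move: (hn (P m)); rewrite -{1}em e hi.
Qed.

Lemma nbr_G (T : finType) (G : T -> {set T}) N (P : {ffun 'I_N -> T}) m i :
  i \in G (P m) -> nbr G P i.
Proof. by move=> hi; apply/existsP; exists m. Qed.

Lemma pprob_P (R : rcfType) (T : finType) (G : T -> {set T}) (g N : nat) (pi0 : R)
  (P : {ffun 'I_N -> T}) m : pprob G g pi0 P (P m) = pi0.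
Proof. by rewrite /pprob; have := tgt_P P m; rewrite /tgt => ->. Qed.

Lemma pprob_G (R : rcfType) (T : finType) (G : T -> {set T}) (g N : nat) (pi0 : R)
  (P : {ffun 'I_N -> T}) m i :
  DisjP G P -> (forall j, j \notin G j) -> i \in G (P m) ->
  pprob G g pi0 P i = (1 - pi0) / g%:R.
Proof.
move=> hd hn hi; rewrite /pprob.
by move: (tgt_G hd hn hi) (nbr_G hi); rewrite /tgt /nbr => -> ->.
Qed.

Lemma lsf_P (R : rcfType) (T : finType) (G : T -> {set T}) N (P : {ffun 'I_N -> T})
  (vt vn : R) m : lsf G P vt vn (P m) = vt.
Proof. by rewrite /lsf tgt_P. Qed.

Lemma lsf_G (R : rcfType) (T : finType) (G : T -> {set T}) N (P : {ffun 'I_N -> T})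
  (vt vn : R) m i :
  DisjP G P -> (forall j, j \notin G j) -> i \in G (P m) -> lsf G P vt vn i = vn.
Proof. by move=> hd hn hi; rewrite /lsf (tgt_G hd hn hi) (nbr_G hi). Qed.

Lemma sum_lsf (R : rcfType) (T : finType) (G : T -> {set T}) (g N : nat)
  (P : {ffun 'I_N -> T}) (vt vn : R) :
  DisjP G P -> (forall j, j \notin G j) -> (forall j, #|G j| = g) ->
  \sum_i lsf G P vt vn i = N%:R * (vt + g%:R * vn).
Proof.
move=> hd hn hg.
have E : forall i, lsf G P vt vn i = \sum_(m < N) (if i \in Hn G (P m) then lsf G P vt vn i else 0).
  move=> i; case: (boolP [exists m, i \in Hn G (P m)]) => [/existsP[m0 hm0]|hno].
    rewrite (bigD1 m0) //= hm0 big1 ?addr0 // => m hm.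
    case: ifP => // him; by move: hm; rewrite (same_m hd him hm0) eqxx.
  rewrite big1; last by move=> m _; case: ifP => // him; case/negP: hno; apply/existsP; exists m.
  rewrite /lsf; case: ifP => [/existsP[m /eqP e]|_].
    by case/negP: hno; apply/existsP; exists m; rewrite /Hn -e setU11.
  case: ifP => // /existsP[m hm]; case/negP: hno; apply/existsP; exists m.
  by rewrite /Hn in_setU1 hm orbT.
under eq_bigr do rewrite E.
rewrite exchange_big /=.
rewrite (eq_bigr (fun _ : 'I_N => vt + g%:R * vn)).
  by rewrite sumr_const card_ord [RHS]mulr_natl.
move=> m _; rewrite -big_mkcond /= /Hn big_setU1 ?hn //= lsf_P.
rewrite (eq_bigr (fun _ : T => vn)); last by move=> i hi; apply: (lsf_G vt vn hd hn hi).
by rewrite sumr_const hg mulr_natl.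
Qed.
Lemma kkt (R : rcfType) (T : finType) (p ls l : T -> R) (c nu Lam : R) :
  0 < c -> (forall i, 0 <= p i) -> (forall i, 0 <= ls i) -> (forall i, 0 <= l i) ->
  \sum_i ls i = Lam -> \sum_i l i = Lam ->
  (forall i, p i / (c + ls i)^+2 <= nu) ->
  (forall i, ls i != 0 -> p i / (c + ls i)^+2 = nu) ->
  \sum_i p i / (c + l i) <= \sum_i p i / (c + ls i) ->
  forall i, 0 < p i -> l i = ls i.
Proof.
move=> c0 p0 ls0 l0 sls sl hle heq opt.
have pa : forall i, 0 < c + ls i by move=> i; apply: ltr_wpDr.
have pb : forall i, 0 < c + l i by move=> i; apply: ltr_wpDr.
pose Q i := p i * (l i - ls i)^+2 / ((c + l i) * (c + ls i)^+2).
have Q0 : forall i, 0 <= Q i.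
  move=> i; apply: divr_ge0; first by apply: mulr_ge0 => //; apply: sqr_ge0.
  by apply: mulr_ge0; [apply: ltW | apply: sqr_ge0].
have Qle : forall i, Q i <= (p i / (c + l i) - p i / (c + ls i)) + nu * (l i - ls i).
  move=> i.
  have -> : Q i = (p i / (c + l i) - p i / (c + ls i)) + p i / (c + ls i)^+2 * (l i - ls i).
    rewrite /Q; have := pa i; have := pb i; rewrite !lt0r => /andP[h1 _] /andP[h2 _].
    by field; rewrite h1 h2.
  rewrite lerD2l; have [e|ne] := eqVneq (ls i) 0.
    by rewrite e subr0; apply: ler_wpM2r => //; rewrite -e.
  by rewrite heq.
have sQ : \sum_i Q i <= 0.
  apply: le_trans (ler_sum _ (fun i _ => Qle i)) _.
  rewrite big_split /= sumrB -mulr_sumr sumrB sls sl subrr mulr0 addr0 subr_le0 //.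
have sQ0 : \sum_i Q i = 0 by apply/eqP; rewrite eq_le sQ sumr_ge0.
move=> i pi0; have := psumr_eq0P (fun i _ => Q0 i) sQ0 (erefl true) => /(_ i).
rewrite /Q => /eqP; rewrite !mulf_eq0 invr_eq0 !mulf_eq0 subr_eq0 orbb.
have := pa i; have := pb i; rewrite !lt0r => /andP[/negbTE -> _] /andP[/negbTE -> _].
by rewrite (negbTE (lt0r_neq0 pi0)) /= !orbF => /eqP.
Qed.

Lemma opt_vals (R : rcfType) (T : finType) (G : T -> {set T}) (g N : nat)
  (pi0 Lam c : R) (P : {ffun 'I_N -> T}) (lam : T -> R) (vt vn nu : R) :
  DisjP G P -> (forall j, j \notin G j) -> (forall j, #|G j| = g) -> (0 < g)%N ->
  0 < pi0 -> pi0 < 1 -> 0 < c ->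
  is_opt_alloc G g pi0 Lam P (fun _ => c) lam ->
  0 <= vt -> 0 <= vn -> N%:R * (vt + g%:R * vn) = Lam -> 0 <= nu ->
  pi0 / (c + vt)^+2 <= nu -> (1 - pi0) / g%:R / (c + vn)^+2 <= nu ->
  (vt != 0 -> pi0 / (c + vt)^+2 = nu) ->
  (vn != 0 -> (1 - pi0) / g%:R / (c + vn)^+2 = nu) ->
  forall m, lam (P m) = vt /\ forall y, y \in G (P m) -> lam y = vn.
Proof.
move=> hd hn hg g0 p0 p1 c0 [l0 sl opt] vt0 vn0 sls nu0 le1 le2 eq1 eq2.
have q0 : 0 < (1 - pi0) / g%:R by apply: divr_gt0; rewrite ?subr_gt0 ?ltr0n.
have pp0 : forall i, 0 <= pprob G g pi0 P i.
  by move=> i; rewrite /pprob; case: ifP => _; [apply: ltW|case: ifP => _ //; apply: ltW].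
have ls0 : forall i, 0 <= lsf G P vt vn i.
  by move=> i; rewrite /lsf; case: ifP => _ //; case: ifP => _.
have sls' : \sum_i lsf G P vt vn i = Lam by rewrite (sum_lsf vt vn hd hn hg).
have key := @kkt R T (pprob G g pi0 P) (lsf G P vt vn) lam c nu Lam c0 pp0 ls0 l0 sls' sl.
have K := key _ _ (opt _ ls0 sls').
have {}K : forall i, 0 < pprob G g pi0 P i -> lam i = lsf G P vt vn i.
  apply: K.
    move=> i; rewrite /pprob /lsf /tgt /nbr; case: ifP => _ //; case: ifP => _ //.
    by rewrite mul0r.
  move=> i; rewrite /pprob /lsf /tgt /nbr; case: ifP => _; first exact: eq1.
  case: ifP => _; first exact: eq2.
  by rewrite eqxx.
move=> m; split.
  by rewrite K (lsf_P, pprob_P).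
move=> y hy; rewrite K ?(lsf_G vt vn hd hn hy) //.
by rewrite (pprob_G g pi0 hd hn hy).
Qed.

Lemma E_vals (R : rcfType) (T : finType) (G : T -> {set T}) (g N : nat)
  (pi0 Lam c : R) (P : {ffun 'I_N -> T}) (lam : T -> R) (vt vn nu : R) (n : 'I_N) :
  DisjP G P -> (forall j, j \notin G j) -> (forall j, #|G j| = g) -> (0 < g)%N ->
  0 < pi0 -> pi0 < 1 -> 0 < c ->
  is_opt_alloc G g pi0 Lam P (fun _ => c) lam ->
  0 <= vt -> 0 <= vn -> N%:R * (vt + g%:R * vn) = Lam -> 0 <= nu ->
  pi0 / (c + vt)^+2 <= nu -> (1 - pi0) / g%:R / (c + vn)^+2 <= nu ->
  (vt != 0 -> pi0 / (c + vt)^+2 = nu) ->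
  (vn != 0 -> (1 - pi0) / g%:R / (c + vn)^+2 = nu) ->
  \sum_y move G g pi0 (P n) y * lam y = pi0 * vt + (1 - pi0) * vn.
Proof.
move=> hd hn hg g0 p0 p1 c0 opt vt0 vn0 sls nu0 le1 le2 eq1 eq2.
have [h1 h2] := opt_vals hd hn hg g0 p0 p1 c0 opt vt0 vn0 sls nu0 le1 le2 eq1 eq2 n.
rewrite move_expect // h1 (eq_bigr (fun _ : T => vn)) // sumr_const hg.
by rewrite -[vn *+ g]mulr_natl mulrA divfK // pnatr_eq0 -lt0n.
Qed.
Lemma caseA_alg (R : rcfType) (sp r s c L pi0 gR NR : R) :
  0 < sp -> 0 < r -> 0 < s -> 0 < c -> 0 <= L -> 0 < NR ->
  sp^+2 = pi0 -> r^+2 = 1 - pi0 -> s^+2 = gR ->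
  r <= s * sp -> c * (s * sp - r) <= r * L ->
  let mu := ((1 + gR) * c + L) / (sp + s * r) in
  let vt := sp * mu - c in let vn := r / s * mu - c in let nu := 1 / mu^+2 in
  [/\ 0 <= vt, 0 <= vn, NR * (vt + gR * vn) = NR * L, 0 <= nu &
      [/\ pi0 / (c + vt)^+2 = nu, (1 - pi0) / gR / (c + vn)^+2 = nu &
      pi0 * vt + (1 - pi0) * vn = (pi0 * sp + (1 - pi0) * r / s) / (sp + s * r) * ((1 + gR) * c + L) - c]].
Proof.
move=> sp0 r0 s0 c0 L0 N0 sp2 r2 s2 hrs hc mu vt vn nu.
have den0 : 0 < sp + s * r by apply: addr_gt0 => //; apply: mulr_gt0.
have g0 : 0 <= gR by rewrite -s2 sqr_ge0.
have gc : 0 < (1 + gR) * c by apply: mulr_gt0 => //; lra.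
have mu0 : 0 < mu by apply: divr_gt0 => //; lra.
have sne : s != 0 by rewrite gt_eqF.
have spne : sp != 0 by rewrite gt_eqF.
have dne : sp + s * r != 0 by rewrite gt_eqF.
have mune : mu != 0 by rewrite gt_eqF.
have vn0 : 0 <= vn.
  have -> : vn = (r * L - c * (s * sp - r)) / (s * (sp + s * r)).
    by rewrite /vn /mu -s2; field; rewrite sne dne.
  by apply: divr_ge0; [rewrite subr_ge0 | apply: ltW; apply: mulr_gt0].
have vt0 : 0 <= vt.
  apply: le_trans vn0 _; rewrite /vt /vn lerD2r ler_wpM2r ?(ltW mu0) //.
  by rewrite ler_pdivrMr // mulrC.
split => //.
- congr (_ * _); rewrite /vt /vn /mu -s2; field; by rewrite sne dne.
- by apply: divr_ge0 => //; apply: exprn_ge0; apply: ltW.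
split.
- rewrite /nu /vt -sp2; have -> : c + (sp * mu - c) = sp * mu by ring.
  by field; rewrite spne mune.
- rewrite /nu /vn -r2 -s2; have -> : c + (r / s * mu - c) = r / s * mu by ring.
  by field; rewrite sne mune gt_eqF.
- by rewrite /vt /vn /mu; field; rewrite sne dne.
Qed.

Lemma caseB_alg (R : rcfType) (sp r s c L pi0 gR : R) :
  0 < sp -> 0 < r -> 0 < s -> 0 < c -> 0 <= L ->
  sp^+2 = pi0 -> r^+2 = 1 - pi0 -> s^+2 = gR ->
  r * L <= c * (s * sp - r) ->
  (1 - pi0) / gR / (c + 0)^+2 <= pi0 / (c + L)^+2.
Proof.
move=> sp0 r0 s0 c0 L0 sp2 r2 s2 hc.
have h1 : r * (c + L) <= s * sp * c by lra.
have h2 : (r * (c + L))^+2 <= (s * sp * c)^+2.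
  rewrite ler_sqr ?nnegrE //; [apply: mulr_ge0; [lra|lra] | apply: mulr_ge0; [apply: mulr_ge0|]; lra].
have cL : 0 < c + L by lra.
rewrite addr0 -r2 -sp2 -s2.
have E : r ^+ 2 / s ^+ 2 / c ^+ 2 - sp ^+ 2 / (c + L) ^+ 2
   = ((r * (c + L))^+2 - (s * sp * c)^+2) / (s^+2 * c^+2 * (c + L)^+2).
  by field; rewrite !gt_eqF.
rewrite -subr_le0 E; apply: mulr_le0_ge0; first by rewrite subr_le0.
by rewrite invr_ge0; apply: mulr_ge0; [apply: mulr_ge0|]; apply: exprn_ge0; lra.
Qed.

Lemma caseB0_alg (R : rcfType) (sp r s c L pi0 gR : R) :
  0 < sp -> 0 < r -> 0 < s -> 0 < c ->
  sp^+2 = pi0 -> r^+2 = 1 - pi0 -> s^+2 = gR -> r = s * sp ->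
  (pi0 * sp + (1 - pi0) * r / s) / (sp + s * r) * ((1 + gR) * c + L) - c = pi0 * L.
Proof.
move=> sp0 r0 s0 c0 sp2 r2 s2 e.
have hp : pi0 * (1 + gR) = 1.
  have h : 1 - pi0 = gR * pi0 by rewrite -r2 e -sp2 -s2; ring.
  by rewrite mulrDr mulr1 [pi0 * gR]mulrC -h; ring.
have g0 : 0 <= gR by rewrite -s2 sqr_ge0.
have -> : (pi0 * sp + (1 - pi0) * r / s) / (sp + s * r) = 1 / (1 + gR).
  rewrite e -s2 -sp2.
  have d1 : sp + s * (s * sp) != 0.
    by rewrite gt_eqF // addr_gt0 // mulr_gt0 // mulr_gt0.
  have d2 : 1 + s ^+ 2 != 0 by rewrite gt_eqF // ltr_wpDr ?sqr_ge0.
  by field; rewrite d1 d2 gt_eqF.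
have d3 : 1 + gR != 0 by rewrite gt_eqF // ltr_wpDr.
have -> : pi0 = 1 / (1 + gR).
  by apply: (mulIf d3); rewrite hp; field; rewrite d3.
by field; rewrite d3.
Qed.

Lemma step_E (R : rcfType) (T : finType) (G : T -> {set T}) (g N : nat)
  (pi0 Lam c : R) (P : {ffun 'I_N -> T}) (lam : T -> R) (n : 'I_N) :
  DisjP G P -> (forall j, j \notin G j) -> (forall j, #|G j| = g) -> (0 < g)%N ->
  0 <= pi0 -> pi0 < 1 -> (1 - pi0) / g%:R <= pi0 -> 0 <= Lam -> 0 < c ->
  is_opt_alloc G g pi0 Lam P (fun _ => c) lam ->
  \sum_y move G g pi0 (P n) y * lam y = cbar_step g N pi0 Lam c - c.
Proof.
move=> hd hn hg g0 p0' p1 hq Lam0 c0 opt.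
have gR : 0 < g%:R :> R by rewrite ltr0n.
have p0 : 0 < pi0.
  by apply: lt_le_trans hq; apply: divr_gt0 => //; rewrite subr_gt0.
have N0 : 0 < N%:R :> R by rewrite ltr0n; case: N n {P hd opt} => [[]|].
set sp := Num.sqrt pi0; set r := Num.sqrt (1 - pi0); set s := Num.sqrt (g%:R : R).
have sp0 : 0 < sp by rewrite sqrtr_gt0.
have r0 : 0 < r by rewrite sqrtr_gt0 subr_gt0.
have s0 : 0 < s by rewrite sqrtr_gt0.
have sp2 : sp^+2 = pi0 by rewrite sqr_sqrtr // ltW.
have r2 : r^+2 = 1 - pi0 by rewrite sqr_sqrtr // subr_ge0 ltW.
have s2 : s^+2 = g%:R by rewrite sqr_sqrtr // ltW.
set L := Lam / N%:R.
have L0 : 0 <= L by apply: divr_ge0 => //; apply: ltW.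
have NL : N%:R * L = Lam by rewrite /L mulrC divfK // gt_eqF.
have hq' : r^+2 <= (s * sp)^+2.
  by rewrite exprMn r2 sp2 s2 -ler_pdivrMl // mulrC.
have hrs : r <= s * sp.
  by move: hq'; rewrite ler_sqr ?nnegrE //; apply: ltW; rewrite ?mulr_gt0.
have Hsq : Num.sqrt (g%:R * (1 - pi0)) = s * r by rewrite sqrtrM ?ler0n.
have He : eG g pi0 = s * sp / r - 1.
  rewrite /eG sqrtrM ?mulr_ge0 ?ler0n ?ltW // sqrtrM ?ler0n //.
  by rewrite sqrtrV // subr_ge0 ltW.
have hre : s * sp - r = r * eG g pi0 by rewrite He; field; rewrite gt_eqF.
have e0 : 0 <= eG g pi0.
  by rewrite He subr_ge0 ler_pdivlMr // mul1r.
have EA : c * (s * sp - r) <= r * L ->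
   \sum_y move G g pi0 (P n) y * lam y =
   (pi0 * sp + (1 - pi0) * r / s) / (sp + s * r) * ((1 + g%:R) * c + L) - c.
  move=> hc.
  have [vt0 vn0 sm nu0 [e1 e2 e3]] := caseA_alg sp0 r0 s0 c0 L0 N0 sp2 r2 s2 hrs hc.
  rewrite -e3; apply: E_vals hd hn hg g0 p0 p1 c0 opt vt0 vn0 _ nu0 _ _ _ _.
  - by rewrite sm.
  - by rewrite e1.
  - by rewrite e2.
  - by move=> _; rewrite e1.
  - by move=> _; rewrite e2.
rewrite /cbar_step /ccrit Hsq -/sp -/r -/s.
case: ifP => hc.
- rewrite EA //; rewrite hre.
  have [ez|epos] := eqVneq (eG g pi0) 0.
    by rewrite ez !mulr0 mulr_ge0 // ltW.
  have ep : 0 < eG g pi0 by rewrite lt0r epos.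
  move: hc; rewrite invfM mulrA -/L ltr_pdivlMr // => hc.
  rewrite mulrCA ler_pM2l //; exact: ltW.
- have -> : c + pi0 * Lam / N%:R - c = pi0 * L by rewrite /L mulrA; ring.
  have [ez|epos] := eqVneq (eG g pi0) 0.
    rewrite EA; last by rewrite hre ez !mulr0 mulr_ge0 // ltW.
    apply: caseB0_alg => //.
    by apply/eqP; rewrite eq_sym -subr_eq0 hre ez mulr0.
  have ep : 0 < eG g pi0 by rewrite lt0r epos.
  move: hc; rewrite invfM mulrA -/L => /negbT; rewrite -leNgt ler_pdivrMr // => hc.
  have hc' : r * L <= c * (s * sp - r) by rewrite hre (mulrCA c) ler_pM2l.
  rewrite (E_vals (vt := L) (vn := 0) (nu := pi0 / (c + L)^+2) n hd hn hg g0 p0 p1 c0 opt) //.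
  + by rewrite mulr0 addr0.
  + by rewrite mulr0 addr0.
  + by apply: divr_ge0; [apply: ltW | apply: exprn_ge0; apply: addr_ge0 => //; apply: ltW].
  + exact: (caseB_alg sp0 r0 s0 c0 L0 sp2 r2 s2 hc').
  + by rewrite eqxx.
Qed.

Lemma pick_n (T : finType) (G : T -> {set T}) N (P : {ffun 'I_N -> T}) n i :
  DisjP G P -> i \in Hn G (P n) -> [pick m | i \in Hn G (P m)] = Some n.
Proof.
move=> hd hi; case: pickP => [m hm|hno]; last by move: (hno n); rewrite hi.
by rewrite (same_m hd hm hi).
Qed.

Lemma Hn_self (T : finType) (G : T -> {set T}) (x : T) : x \in Hn G x.
Proof. by rewrite /Hn setU11. Qed.

Lemma prec_const (R : rcfType) (T : finType) (G : T -> {set T}) N k (sig2 sig02 D : R)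
  s0 pol (h : Hist T N k) n y :
  DisjP G (psi s0 h k) -> y \in Hn G (psi s0 h k n) ->
  prec G sig2 sig02 D s0 pol h k.+1 y = prec G sig2 sig02 D s0 pol h k.+1 (psi s0 h k n).
Proof.
case: k h => [|k] h hd hy //.
by rewrite precS // [RHS]precS // (pick_n hd hy) (pick_n hd (Hn_self _ _)).
Qed.

Lemma cbar_pos (R : rcfType) (g N : nat) (pi0 Lam sig2 sig02 : R) t :
  0 < pi0 -> pi0 < 1 -> 0 <= Lam -> 0 < sig2 -> 0 < sig02 ->
  0 < cbar g N pi0 Lam sig2 sig02 t.+1.
Proof.
move=> p0 p1 L0 s20 s00; elim: t => [|t IH]; first by apply: divr_gt0.
have sp0 : 0 < Num.sqrt pi0 by rewrite sqrtr_gt0.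
have LN : 0 <= Lam / N%:R by apply: divr_ge0.
have q0 : 0 <= 1 - pi0 by rewrite subr_ge0; apply: ltW.
have A1 : 0 <= (1 - pi0) * Num.sqrt (1 - pi0) / Num.sqrt (g%:R : R).
  by apply: divr_ge0; [apply: mulr_ge0 => //; apply: sqrtr_ge0|apply: sqrtr_ge0].
have A2 : 0 < pi0 * Num.sqrt pi0 by apply: mulr_gt0.
have A3 : 0 <= Num.sqrt (g%:R * (1 - pi0) : R) by apply: sqrtr_ge0.
have A4 : 0 < (1 + g%:R) * cbar g N pi0 Lam sig2 sig02 t.+1.
  by apply: mulr_gt0 => //; apply: ltr_wpDr => //; apply: ler0n.
rewrite [cbar _ _ _ _ _ _ t.+2]/= /cbar_step; case: ifP => _.
  apply: mulr_gt0; first by apply: divr_gt0; [apply: ltr_wpDr|apply: ltr_wpDr].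
  by apply: ltr_wpDr.
apply: ltr_wpDr => //.
by rewrite -mulrA; apply: mulr_ge0 => //; apply: ltW.
Qed.

Unset Implicit Arguments.

Theorem lemma1 (R : rcfType) (T : finType) (G : T -> {set T}) (g N : nat)
  (pi0 Lam sig2 sig02 Delta2 : R) (s0 : {ffun 'I_N -> T})
  (pol : nat -> {ffun 'I_N -> T} -> T -> R) :
  (0 < g)%N ->
  (forall j : T, #|G j| = g) ->
  (forall j : T, j \notin G j) ->
  0 <= pi0 -> pi0 < 1 -> (1 - pi0) / g%:R <= pi0 ->
  0 <= Lam -> 0 < sig2 -> 0 < sig02 ->
  Delta2 = 0 ->
  (forall (k : nat) (h : Hist T N k) (j : nat), (j <= k)%N ->
     hprob G g pi0 s0 h != 0 ->
     forall n m : 'I_N, n != m ->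
       [disjoint Hn G (psi s0 h j n) & Hn G (psi s0 h j m)]) ->
  (forall (t : nat) (P : {ffun 'I_N -> T}), (1 <= t)%N ->
     is_opt_alloc G g pi0 Lam P (fun _ => cbar g N pi0 Lam sig2 sig02 t) (pol t P)) ->
  forall t : nat, (1 <= t)%N ->
  forall (n : 'I_N) (sel : Hist T N t.-1 -> T),
    (forall h, sel h \in Hn G (psi s0 h t.-1 n)) ->
    \sum_(h : Hist T N t.-1)
        hprob G g pi0 s0 h * prec G sig2 sig02 Delta2 s0 pol h t (sel h)
      <= cbar g N pi0 Lam sig2 sig02 t.
Proof.
move=> g0 hg hn p0' p1 hq Lam0 s20 s00 D0 Hdis Hopt t t1 n.
have p0 : 0 < pi0.
  by apply: lt_le_trans hq; apply: divr_gt0; rewrite ?subr_gt0 ?ltr0n.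
have p1' : pi0 <= 1 by apply: ltW.
have DP : forall k (h : Hist T N k) j, (j <= k)%N -> hprob G g pi0 s0 h != 0 ->
    DisjP G (psi s0 h j).
  by move=> k h j hj hp m m' hm; apply: Hdis.
set cb := cbar g N pi0 Lam sig2 sig02.
case: t t1 => [//|k] _.
change (forall sel : Hist T N k -> T, (forall h, sel h \in Hn G (psi s0 h k n)) ->
  \sum_(h : Hist T N k) hprob G g pi0 s0 h * prec G sig2 sig02 Delta2 s0 pol h k.+1 (sel h)
  <= cb k.+1).
elim: k => [|k IH] sel hsel.
  rewrite (eq_bigr (fun _ => cb 1%N)); last by move=> h _; rewrite /hprob big_ord0 mul1r.
  by rewrite sumr_const card_ffun card_ord expn0.
have Hterm : forall (h : Hist T N k) z,
    hprob G g pi0 s0 (ext h z) * prec G sig2 sig02 Delta2 s0 pol (ext h z) k.+2 (sel (ext h z)) =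
    hprob G g pi0 s0 h * ((\prod_(m < N) move G g pi0 (psi s0 h k m) (z m)) *
       (prec G sig2 sig02 Delta2 s0 pol h k.+1 (psi s0 h k n) + pol k.+1 (psi s0 h k) (z n))).
  move=> h z; rewrite hprob_ext mulrA.
  have [->|ne] := eqVneq (hprob G g pi0 s0 h * \prod_(m < N) move G g pi0 (psi s0 h k m) (z m)) 0.
    by rewrite !mul0r.
  congr (_ * _).
  have hne : hprob G g pi0 s0 (ext h z) != 0 by rewrite hprob_ext.
  have hne' : hprob G g pi0 s0 h != 0 by move: ne; rewrite mulf_eq0 negb_or => /andP[].
  have hmv : move G g pi0 (psi s0 h k n) (z n) != 0.
    move: ne; rewrite mulf_eq0 negb_or => /andP[_]; rewrite prodf_seq_neq0 => /allP.
    by move=> /(_ n (mem_index_enum n)).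
  rewrite precS //.
  have hs := hsel (ext h z); rewrite psi_ext_last in hs.
  have hd := DP _ _ _ (leqnn k.+1) hne; rewrite psi_ext_last in hd.
  rewrite psi_ext_last (pick_n hd hs) psi_ext // D0 mul0r addr0 invrK.
  rewrite (@prec_eq R T G N k.+1 k sig2 sig02 0 s0 pol (ext h z) h k.+1); last first.
    by move=> j hj; apply: psi_ext.
  congr (_ + _); apply: prec_const; first exact: DP.
  exact: (move_in hmv).
rewrite sum_ext.
rewrite (eq_bigr (fun h => hprob G g pi0 s0 h * prec G sig2 sig02 Delta2 s0 pol h k.+1 (psi s0 h k n) +
                          hprob G g pi0 s0 h * (cb k.+2 - cb k.+1))).
  rewrite big_split /= -mulr_suml hprob_sum1 // mul1r.
  have := IH (fun h => psi s0 h k n) (fun h => Hn_self _ _).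
  rewrite /=; lra.
move=> h _; under eq_bigr do rewrite Hterm.
rewrite -mulr_sumr -mulrDr.
have [->|hne] := eqVneq (hprob G g pi0 s0 h) 0; first by rewrite !mul0r.
congr (_ * _).
under eq_bigr do rewrite mulrDr.
rewrite big_split /= -mulr_suml prod_move_sum // mul1r; congr (_ + _).
rewrite (marginal pi0 (psi s0 h k) n (pol k.+1 (psi s0 h k))) //.
rewrite /cb.
change (cbar g N pi0 Lam sig2 sig02 k.+2) with
  (cbar_step g N pi0 Lam (cbar g N pi0 Lam sig2 sig02 k.+1)).
apply: step_E => //; first exact: DP.
  exact: cbar_pos.
exact: Hopt.
Qed.
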